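(* In the twisted Yangian $Y^+(\mathfrak{gl}_{2n+1})$, with $\hat n=n+1$, for every $1\le k\le n$ one has, as an identity of formal series in $u^{-1},v^{-1}$ (rational coefficients expanded accordingly), $$s_{\hat n\hat n}(v)\,s_{k\hat n}(u)=f^-(v,u)\,f^+(v,\tilde u)\,s_{k\hat n}(u)\,s_{\hat n\hat n}(v)-\Big(\frac{p(v)}{u-v}\,s_{k\hat n}(v)+\frac{p(\tilde v)}{u-\tilde v}\,s_{k\hat n}(\tilde v)\Big)s_{\hat n\hat n}(u),$$ where $p(v):=1+\frac{1}{v-\tilde v}$.
   Context: Fix $n\ge1$, $N=2n+1$, $\hat n=n+1$ (orthogonal case, upper signs). Fix $\rho\in\mathbb C$ and write $\tilde u:=-u-\rho$, $\tilde v:=-v-\rho$. Let $f^\pm(u,v):=\frac{u-v\pm1}{u-v}$. For $k\in\mathbb N$ let $E^{(k)}_{ij}$ be matrix units of $\mathrm{End}(\mathbb C^k)$, $P^{(k,k)}=\sum_{i,j}E^{(k)}_{ij}\otimes E^{(k)}_{ji}$, $R^{(k,k)}(u)=I-u^{-1}P^{(k,k)}$. $Y^+(\mathfrak{gl}_{2n+1})$ is generated by $s_{ij}[r]$, $1\le i,j\le 2n+1$, $r\ge1$, with $s_{ij}(u)=\delta_{ij}+\sum_{r\ge1}s_{ij}[r]u^{-r}$. Let $\alpha(i)=i$ for $i\le n+1$ and $\alpha(i)=i-1$ for $i>n+1$, and $S(u):=\sum_{i,j=1}^{2n+2}E^{(2n+2)}_{ij}\otimes s_{\alpha(i)\alpha(j)}(u)$.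 Let $\hat\omega(E^{(2n+2)}_{ij})=E^{(2n+2)}_{\bar j\bar i}$ with $\bar i=2n+3-i$, $\hat S=\hat\omega(S)$, $\hat R=(\mathrm{id}\otimes\hat\omega)(R^{(2n+2,2n+2)})$. Defining relations: $R_{12}(u-v)S_1(u)\hat R_{12}(\tilde v-u)S_2(v)=S_2(v)\hat R_{12}(\tilde v-u)S_1(u)R_{12}(u-v)$ with $R=R^{(2n+2,2n+2)}$, and $\hat S(\tilde u)=S(u)+\frac{S(u)-S(\tilde u)}{u-\tilde u}$. *)

(* Defs.v *)
From HB Require Import structures.
From mathcomp Require Import all_boot all_order all_algebra.
From mathcomp Require Import reals complex.
Set Implicit Arguments. Unset Strict Implicit. Unset Printing Implicit Defensive.
Import Order.TTheory GRing.Theory Num.Theory.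
Local Open Scope ring_scope.

Definition Cx (R : realType) : fieldType := (complex R).

Section TwistedYangian.
Variables (R : realType).
Local Notation C := (Cx R).
Variable (A : algType C).

(** One-variable formal series in x^{-1}: f : nat -> A, f m = coefficient of x^{-m}.
    Two-variable objects with polynomial prefactors: F : int -> int -> A,
    F i j = coefficient of u^{-i} v^{-j} (i, j may be negative). *)

Definition ext (f : nat -> A) (i : int) : A :=
  match i with Posz m => f m | Negz _ => 0 end.

(* coefficient of x^{-m} in the expansion of (-x-rho)^{-r} in powers of x^{-1} *)
Definition tcoef (rho : C) (r m : nat) : C :=
  if r == 0%N then (m == 0%N)%:R
  else if (r <= m)%N then (-1) ^+ m * ('C(m.-1, r.-1))%:R * rho ^+ (m - r)
  else 0.

(* substitution x |-> x~ := -x-rho in a series f(x) *)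
Definition stilde (rho : C) (f : nat -> A) (m : nat) : A :=
  \sum_(r < m.+1) tcoef rho r m *: f r.

Definition ser_uv (f g : nat -> A) (i j : int) : A := ext f i * ext g j.
Definition ser_vu (g f : nat -> A) (i j : int) : A := ext g j * ext f i.

(* multiplication by a polynomial p(u,v) : p : {poly {poly C}}, outer variable u,
   inner variable v *)
Definition pmul2 (p : {poly {poly C}}) (F : int -> int -> A) (i j : int) : A :=
  \sum_(k < size p) \sum_(l < size p`_k) (p`_k)`_l *: F (i + k%:Z) (j + l%:Z).

Definition pmul1 (p : {poly C}) (F : int -> A) (i : int) : A :=
  \sum_(k < size p) p`_k *: F (i + k%:Z).

Variable n : nat.
(* 0-based indices: 'I_(2n+1) for gl_{2n+1}, 'I_(2n+2) for the doubled matrix S *)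
Local Notation N := (n.*2).+1.
Local Notation N2 := (n.*2).+2.

Variable s : 'I_N -> 'I_N -> nat -> A. (* s i j r = s_{ij}[r], used for r >= 1 *)

(* s_{ij}(u) = delta_ij + sum_{r>=1} s_ij[r] u^{-r} *)
Definition sser (i j : 'I_N) (r : nat) : A :=
  if r is 0 then (i == j)%:R else s i j r.

Definition alpha (a : 'I_N2) : 'I_N := inord (if (a <= n)%N then (a : nat) else (a : nat).-1).

Definition Sent (a b : 'I_N2) : nat -> A := sser (alpha a) (alpha b).

Definition bar (a : 'I_N2) : 'I_N2 := rev_ord a.

Local Notation Idx := ('I_N2 * 'I_N2)%type.

Variable rho : C.

Local Notation pu := ('X : {poly {poly C}}).
Local Notation pv := (('X : {poly C})%:P : {poly {poly C}}).
Local Notation pc c := ((c : C)%:P%:P : {poly {poly C}}).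

(* (u-v) R(u-v) = (u-v) I - P  on C^N2 (x) C^N2, entries indexed by pairs *)
Definition Rc (x y : Idx) : {poly {poly C}} :=
  (x == y)%:R * (pu - pv) - ((x.1 == y.2) && (x.2 == y.1))%:R.
(* (v~ - u) Rhat(v~ - u) = (-u-v-rho) I - Q,  Q = sum_ij E_ij (x) E_{bar i, bar j} *)
Definition Rhc (x y : Idx) : {poly {poly C}} :=
  (x == y)%:R * (- pu - pv - pc rho) - ((x.2 == bar x.1) && (y.2 == bar y.1))%:R.

(* the RS relation, multiplied through by the central factor (u-v)(v~-u) *)
Definition RS_relation : Prop :=
  forall (a b : Idx) (i j : int),
    \sum_(x : Idx) \sum_(y : Idx) \sum_(z : Idx)
       pmul2 (Rc a x * Rhc y z * (x.2 == y.2)%:R * (z.1 == b.1)%:R)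
             (ser_uv (Sent x.1 y.1) (Sent z.2 b.2)) i j
  = \sum_(x : Idx) \sum_(y : Idx) \sum_(z : Idx)
       pmul2 ((a.1 == x.1)%:R * Rhc x y * (y.2 == z.2)%:R * Rc z b)
             (ser_vu (Sent a.2 x.2) (Sent y.1 z.1)) i j.

(* the symmetry relation  Shat(u~) = S(u) + (S(u) - S(u~))/(u - u~),
   with u - u~ = 2u + rho, multiplied through by 2u + rho;
   Shat = omegahat(S), i.e. Shat_{ab} = S_{bar b, bar a} *)
Definition symmetry_relation : Prop :=
  forall (a b : 'I_N2) (i : int),
    pmul1 ('X *+ 2 + rho%:P) (ext (stilde rho (Sent (bar b) (bar a)))) i
  = pmul1 ('X *+ 2 + (rho + 1)%:P) (ext (Sent a b)) i
    - ext (stilde rho (Sent a b)) i.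

End TwistedYangian.

(* Main.v *)
Require Import Defs.
From HB Require Import structures.
From mathcomp Require Import all_boot all_order all_algebra.
From mathcomp Require Import reals complex.
From mathcomp Require Import ring zify.
Import GRing.Theory Num.Theory.
Local Open Scope ring_scope.

Section Pm.
Variable R : realType.
Local Notation C := (Cx R).
Variable A : algType C.
Local Notation pc c := ((c : C)%:P%:P : {poly {poly C}}).
Local Notation pu := ('X : {poly {poly C}}).
Local Notation pv := (('X : {poly C})%:P : {poly {poly C}}).
Local Notation ser := (int -> int -> A).

Lemma sum_widen (m1 m2 : nat) (f : nat -> A) : (m1 <= m2)%N ->
  (forall i, (m1 <= i)%N -> f i = 0) ->
  \sum_(i < m1) f i = \sum_(i < m2) f i.
Proof.
move=> h hf; rewrite -!(big_mkord xpredT f) (big_cat_nat (leq0n m1) h) /=.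
rewrite [X in _ = _ + X]big_nat_cond [X in _ = _ + X]big1 ?addr0 // => i /andP[/andP[h1 _] _]; exact: hf.
Qed.

Definition bnd (p : {poly {poly C}}) : nat := (\sum_(k < size p) size (nth 0%R p k))%N.

Lemma bndP (p : {poly {poly C}}) k : leq (size p`_k) (bnd p).
Proof.
case: (ltnP k (size p)) => hk.
  by rewrite /bnd (bigD1 (Ordinal hk)) //= leq_addr.
by rewrite nth_default // size_poly0.
Qed.

Lemma pmul2W (K L : nat) (p : {poly {poly C}}) (F : ser) (i j : int) : (size p <= K)%N ->
  (forall k, leq (size p`_k) L) ->
  pmul2 p F i j = \sum_(k < K) \sum_(l < L) p`_k`_l *: F (i + k%:Z) (j + l%:Z).
Proof.
move=> hK hL; rewrite /pmul2.
transitivity (\sum_(k < size p) \sum_(l < L) p`_k`_l *: F (i + k%:Z) (j + l%:Z)).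
  apply: eq_bigr => k _.
  rewrite (@sum_widen _ _ (fun l => p`_k`_l *: F (i + k%:Z) (j + l%:Z)) (hL k)) //.
  by move=> l hl; rewrite nth_default // scale0r.
rewrite (@sum_widen _ _ (fun k => \sum_(l < L) p`_k`_l *: F (i + k%:Z) (j + l%:Z)) hK) //.
move=> k hk; rewrite nth_default //; apply: big1 => l _.
by rewrite coef0 scale0r.
Qed.

Lemma pmul2_ext p (F G : ser) i j : (forall i j, F i j = G i j) ->
  pmul2 p F i j = pmul2 p G i j.
Proof. by move=> h; apply: eq_bigr => k _; apply: eq_bigr => l _; rewrite h. Qed.

Lemma pmul2_shift p (F : ser) a b i j :
  pmul2 p (fun i j => F (i + a) (j + b)) i j = pmul2 p F (i + a) (j + b).
Proof. by apply: eq_bigr => k _; apply: eq_bigr => l _; rewrite (addrAC i) (addrAC j). Qed.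

Lemma pmul2_lin (a : C) p q (F : ser) i j :
  pmul2 (pc a * p + q) F i j = a *: pmul2 p F i j + pmul2 q F i j.
Proof.
set K := maxn (size (pc a * p + q)) (maxn (size p) (size q)).
set L := (bnd (pc a * p + q) + bnd p + bnd q)%N.
have hL : forall r, r \in [:: pc a * p + q; p; q] -> forall k, leq (size r`_k) L.
  move=> r; rewrite !inE => /or3P[] /eqP -> k; apply: (leq_trans (bndP _ k)).
  - by rewrite /L; lia.
  - by rewrite /L; lia.
  - by rewrite /L; lia.
rewrite !(@pmul2W K L); try by rewrite /K; lia.
all: try by move=> k; apply: hL; rewrite !inE eqxx ?orbT.
rewrite scaler_sumr -big_split; apply: eq_bigr => k _.
rewrite scaler_sumr -big_split; apply: eq_bigr => l _.
rewrite coefD coefCM coefD coefCM scalerDl scalerA //.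
Qed.

Lemma pmul2_0 (F : ser) i j : pmul2 0 F i j = 0.
Proof. by rewrite /pmul2 size_poly0 big_ord0. Qed.

Lemma pmul2D p q (F : ser) i j : pmul2 (p + q) F i j = pmul2 p F i j + pmul2 q F i j.
Proof. by have := pmul2_lin 1 p q F i j; rewrite !rmorph1 mul1r scale1r. Qed.

Lemma pmul2Cl a p (F : ser) i j : pmul2 (pc a * p) F i j = a *: pmul2 p F i j.
Proof. by rewrite -[pc a * p]addr0 pmul2_lin pmul2_0 addr0. Qed.

Lemma pmul2N p (F : ser) i j : pmul2 (- p) F i j = - pmul2 p F i j.
Proof.
have -> : - p = pc (-1) * p by rewrite !rmorphN !rmorph1 mulN1r.
by rewrite pmul2Cl scaleN1r.
Qed.

Lemma pmul2B p q (F : ser) i j : pmul2 (p - q) F i j = pmul2 p F i j - pmul2 q F i j.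
Proof. by rewrite pmul2D pmul2N. Qed.

Lemma pmul2_1 (F : ser) i j : pmul2 1 F i j = F i j.
Proof.
rewrite (@pmul2W 1 1) ?size_poly1 // ?big_ord1 /=.
  by rewrite !coef1 /= scale1r !addr0.
by move=> k; rewrite coef1; case: (k == 0)%N; rewrite ?size_poly1 ?size_poly0.
Qed.

Lemma pmul2_natl (m : nat) p (F : ser) i j :
  pmul2 (m%:R * p) F i j = m%:R *: pmul2 p F i j.
Proof. by rewrite -pmul2Cl !rmorph_nat. Qed.

Lemma pmul2_nat (m : nat) (F : ser) i j : pmul2 m%:R F i j = m%:R *: F i j.
Proof. by rewrite -[m%:R]mulr1 pmul2_natl pmul2_1. Qed.

Lemma pmul2_Xl p (F : ser) i j : pmul2 (pu * p) F i j = pmul2 p F (i + 1) j.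
Proof.
rewrite (@pmul2W (size p).+1 (bnd p)) ?(@pmul2W (size p) (bnd p)) //; try exact: bndP; last 2 first.
- apply/leq_sizeP => k hk; rewrite coefXM; case: k hk => //= k hk.
  by rewrite nth_default.
- by move=> k; rewrite coefXM; case: (k == 0)%N; rewrite ?size_poly0 ?bndP.
rewrite big_ord_recl /= coefXM eqxx big1 ?add0r; last by move=> l _; rewrite coef0 scale0r.
apply: eq_bigr => k _; apply: eq_bigr => l _; rewrite coefXM /=.
congr (_ *: F _ _); rewrite /bump leq0n add1n; lia.
Qed.

Lemma pmul2_Xr p (F : ser) i j : pmul2 (pv * p) F i j = pmul2 p F i (j + 1).
Proof.
rewrite (@pmul2W (size p) (bnd p).+1) ?(@pmul2W (size p) (bnd p)) //; try exact: bndP; last 2 first.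
- by apply/leq_sizeP => k hk; rewrite coefCM nth_default ?mulr0.
- by move=> k; rewrite coefCM (leq_trans (size_mul_leq _ _)) // size_polyX /= ltnS bndP.
apply: eq_bigr => k _; rewrite big_ord_recl /= coefCM coefXM eqxx scale0r add0r.
apply: eq_bigr => l _; rewrite coefXM /=.
congr (_ *: F _ _); rewrite /bump leq0n add1n; lia.
Qed.

Lemma pmul2_zero p (F : ser) i j : (forall i j, F i j = 0) -> pmul2 p F i j = 0.
Proof. by move=> h; apply: big1 => k _; apply: big1 => l _; rewrite h scaler0. Qed.

Lemma pmul2_addF p (F G : ser) i j :
  pmul2 p (fun i j => F i j + G i j) i j = pmul2 p F i j + pmul2 p G i j.
Proof.
rewrite /pmul2 -big_split; apply: eq_bigr => k _; rewrite -big_split.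
by apply: eq_bigr => l _; rewrite scalerDr.
Qed.

Lemma pmul2_sumF p (I : Type) (r : seq I) (F : I -> ser) i j :
  pmul2 p (fun i j => \sum_(t <- r) F t i j) i j = \sum_(t <- r) pmul2 p (F t) i j.
Proof.
elim: r => [|t r IH]; first by rewrite big_nil pmul2_zero // => *; rewrite big_nil.
rewrite big_cons -IH -pmul2_addF; apply: pmul2_ext => a b; by rewrite big_cons.
Qed.

Lemma pmul2MC (c : {poly C}) q (F : ser) i j :
  pmul2 (c%:P * q) F i j = pmul2 c%:P (pmul2 q F) i j.
Proof.
elim/poly_ind: c q F i j => [|c d IH] q F i j.
  by rewrite !rmorph0 mul0r !pmul2_0.
have e : (c * 'X + d%:P)%:P * q = c%:P * (pv * q) + pc d * q.
  by rewrite rmorphD rmorphM /= mulrDl -mulrA (mulrC c%:P).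
rewrite e pmul2D IH pmul2Cl.
have e2 : (c * 'X + d%:P)%:P = pv * c%:P + pc d * 1.
  by rewrite rmorphD rmorphM /= mulr1 mulrC.
rewrite e2 pmul2D pmul2Cl pmul2_1 pmul2_Xr; congr (_ + _).
have h := pmul2_shift c%:P (pmul2 q F) 0 1 i j; rewrite addr0 in h; rewrite -h.
by apply: pmul2_ext => a b; rewrite pmul2_Xr addr0.
Qed.

Lemma pmul2M p q (F : ser) i j : pmul2 (p * q) F i j = pmul2 p (pmul2 q F) i j.
Proof.
elim/poly_ind: p q F i j => [|p c IH] q F i j.
  by rewrite mul0r !pmul2_0.
rewrite mulrDl -mulrA pmul2D IH pmul2MC pmul2D (mulrC p) pmul2_Xl; congr (_ + _).
have h := pmul2_shift p (pmul2 q F) 1 0 i j; rewrite addr0 in h; rewrite -h.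
by apply: pmul2_ext => a b; rewrite pmul2_Xl addr0.
Qed.

End Pm.

Ltac crush :=
  rewrite /bar /= ?xpair_eqE /=; apply/idP/idP => H;
  repeat match goal with
  | H : is_true (_ && _) |- _ => case/andP: H => ? ?
  | H : is_true (?x == ?y) |- _ => move/eqP: H => H; subst
  end; rewrite ?rev_ordK ?eqxx //=.

Section RS.
Variables (R : realType) (A : algType (Cx R)) (n : nat)
  (s : 'I_(n.*2).+1 -> 'I_(n.*2).+1 -> nat -> A) (rho : Cx R).
Local Notation C := (Cx R).
Local Notation pc c := ((c : C)%:P%:P : {poly {poly C}}).
Local Notation pu := ('X : {poly {poly C}}).
Local Notation pv := (('X : {poly C})%:P : {poly {poly C}}).
Local Notation Idx := ('I_(n.*2).+2 * 'I_(n.*2).+2)%type.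
Local Notation D := (pu - pv).
Local Notation w := (- pu - pv - pc rho).
Local Notation S := (Sent s).

Definition S3 (f : Idx -> Idx -> Idx -> A) :=
  \sum_(x : Idx) \sum_(y : Idx) \sum_(z : Idx) f x y z.

Lemma S3_ext f g : (forall x y z, f x y z = g x y z) -> S3 f = S3 g.
Proof. by move=> h; apply: eq_bigr => x _; apply: eq_bigr => y _; apply: eq_bigr => z _. Qed.

Lemma S3D f g : S3 (fun x y z => f x y z + g x y z) = S3 f + S3 g.
Proof.
rewrite /S3 -big_split; apply: eq_bigr => x _; rewrite -big_split.
by apply: eq_bigr => y _; rewrite -big_split.
Qed.

Lemma S3N f : S3 (fun x y z => - f x y z) = - S3 f.
Proof.
rewrite /S3 -sumrN; apply: eq_bigr => x _; rewrite -sumrN.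
by apply: eq_bigr => y _; rewrite -sumrN.
Qed.

Lemma sum1 (T : finType) (c : T) (H : T -> A) : \sum_x (x == c)%:R *: H x = H c.
Proof.
rewrite (bigD1 c) //= eqxx scale1r big1 ?addr0 // => x /negbTE ->.
by rewrite scale0r.
Qed.

Lemma S3_collapse (m : Idx -> Idx -> Idx -> nat) c1 c2 c3 G :
  (forall x y z, m x y z = [&& x == c1, y == c2 & z == c3] :> nat) ->
  S3 (fun x y z => (m x y z)%:R *: G x y z) = G c1 c2 c3.
Proof.
move=> hm.
transitivity (\sum_(x : Idx) (x == c1)%:R *: \sum_(y : Idx) (y == c2)%:R *:
                \sum_(z : Idx) (z == c3)%:R *: G x y z).
  apply: eq_bigr => x _; rewrite scaler_sumr; apply: eq_bigr => y _.
  rewrite !scaler_sumr; apply: eq_bigr => z _.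
  by rewrite hm !scalerA -!natrM !mulnb andbA.
by rewrite sum1 sum1 sum1.
Qed.

Lemma sumL_expand (a b x y z : Idx) (F : int -> int -> A) i j :
  pmul2 (Rc R a x * Rhc rho y z * (x.2 == y.2)%:R * (z.1 == b.1)%:R) F i j =
  ((x.2 == y.2) * (z.1 == b.1) * (a == x) * (y == z))%N%:R *: pmul2 (D * w) F i j
  - ((x.2 == y.2) * (z.1 == b.1) * (a == x) * ((y.2 == bar y.1) && (z.2 == bar z.1)))%N%:R *: pmul2 D F i j
  - ((x.2 == y.2) * (z.1 == b.1) * ((a.1 == x.2) && (a.2 == x.1)) * (y == z))%N%:R *: pmul2 w F i j
  + ((x.2 == y.2) * (z.1 == b.1) * ((a.1 == x.2) && (a.2 == x.1)) * ((y.2 == bar y.1) && (z.2 == bar z.1)))%N%:R *: F i j.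
Proof.
set P := (_ * _ * _ * _).
have -> : P = ((x.2 == y.2) * (z.1 == b.1) * (a == x) * (y == z))%N%:R * (D * w)
  - ((x.2 == y.2) * (z.1 == b.1) * (a == x) * ((y.2 == bar y.1) && (z.2 == bar z.1)))%N%:R * D
  - ((x.2 == y.2) * (z.1 == b.1) * ((a.1 == x.2) && (a.2 == x.1)) * (y == z))%N%:R * w
  + ((x.2 == y.2) * (z.1 == b.1) * ((a.1 == x.2) && (a.2 == x.1)) * ((y.2 == bar y.1) && (z.2 == bar z.1)))%N%:R.
  rewrite /P /Rc /Rhc; ring.
move: (pu - pv) (- pu - pv - pc rho) => DD ww.
by rewrite !pmul2D !pmul2N !pmul2_natl pmul2_nat.
Qed.

Lemma sumR_expand (a b x y z : Idx) (F : int -> int -> A) i j :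
  pmul2 ((a.1 == x.1)%:R * Rhc rho x y * (y.2 == z.2)%:R * Rc R z b) F i j =
  ((a.1 == x.1) * (y.2 == z.2) * (x == y) * (z == b))%N%:R *: pmul2 (w * D) F i j
  - ((a.1 == x.1) * (y.2 == z.2) * (x == y) * ((z.1 == b.2) && (z.2 == b.1)))%N%:R *: pmul2 w F i j
  - ((a.1 == x.1) * (y.2 == z.2) * ((x.2 == bar x.1) && (y.2 == bar y.1)) * (z == b))%N%:R *: pmul2 D F i j
  + ((a.1 == x.1) * (y.2 == z.2) * ((x.2 == bar x.1) && (y.2 == bar y.1)) * ((z.1 == b.2) && (z.2 == b.1)))%N%:R *: F i j.
Proof.
set P := (_ * _ * _ * _).
have -> : P = ((a.1 == x.1) * (y.2 == z.2) * (x == y) * (z == b))%N%:R * (w * D)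
  - ((a.1 == x.1) * (y.2 == z.2) * (x == y) * ((z.1 == b.2) && (z.2 == b.1)))%N%:R * w
  - ((a.1 == x.1) * (y.2 == z.2) * ((x.2 == bar x.1) && (y.2 == bar y.1)) * (z == b))%N%:R * D
  + ((a.1 == x.1) * (y.2 == z.2) * ((x.2 == bar x.1) && (y.2 == bar y.1)) * ((z.1 == b.2) && (z.2 == b.1)))%N%:R.
  rewrite /P /Rc /Rhc; ring.
move: (pu - pv) (- pu - pv - pc rho) => DD ww.
by rewrite !pmul2D !pmul2N !pmul2_natl pmul2_nat.
Qed.

Lemma RSL a b i j :
  \sum_(x : Idx) \sum_(y : Idx) \sum_(z : Idx)
     pmul2 (Rc R a x * Rhc rho y z * (x.2 == y.2)%:R * (z.1 == b.1)%:R)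
           (ser_uv (S x.1 y.1) (S z.2 b.2)) i j
  = pmul2 (D * w) (ser_uv (S a.1 b.1) (S a.2 b.2)) i j
    - pmul2 D (ser_uv (S a.1 (bar a.2)) (S (bar b.1) b.2)) i j
    - pmul2 w (ser_uv (S a.2 b.1) (S a.1 b.2)) i j
    + ser_uv (S a.2 (bar a.1)) (S (bar b.1) b.2) i j.
Proof.
rewrite -[LHS]/(S3 _).
under S3_ext => x y z do rewrite sumL_expand.
rewrite !S3D !S3N.
rewrite (@S3_collapse _ a (b.1, a.2) (b.1, a.2)); last first.
  by case=> [x1 x2] [y1 y2] [z1 z2]; case: a b => [a1 a2] [b1 b2]; rewrite !mulnb; congr nat_of_bool; crush.
rewrite (@S3_collapse _ a (bar a.2, a.2) (b.1, bar b.1)); last first.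
  by case=> [x1 x2] [y1 y2] [z1 z2]; case: a b => [a1 a2] [b1 b2]; rewrite !mulnb; congr nat_of_bool; crush.
rewrite (@S3_collapse _ (a.2, a.1) (b.1, a.1) (b.1, a.1)); last first.
  by case=> [x1 x2] [y1 y2] [z1 z2]; case: a b => [a1 a2] [b1 b2]; rewrite !mulnb; congr nat_of_bool; crush.
rewrite (@S3_collapse _ (a.2, a.1) (bar a.1, a.1) (b.1, bar b.1)); last first.
  by case=> [x1 x2] [y1 y2] [z1 z2]; case: a b => [a1 a2] [b1 b2]; rewrite !mulnb; congr nat_of_bool; crush.
by [].
Qed.

Lemma RSR a b i j :
  \sum_(x : Idx) \sum_(y : Idx) \sum_(z : Idx)
     pmul2 ((a.1 == x.1)%:R * Rhc rho x y * (y.2 == z.2)%:R * Rc R z b)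
           (ser_vu (S a.2 x.2) (S y.1 z.1)) i j
  = pmul2 (w * D) (ser_vu (S a.2 b.2) (S a.1 b.1)) i j
    - pmul2 w (ser_vu (S a.2 b.1) (S a.1 b.2)) i j
    - pmul2 D (ser_vu (S a.2 (bar a.1)) (S (bar b.2) b.1)) i j
    + ser_vu (S a.2 (bar a.1)) (S (bar b.1) b.2) i j.
Proof.
rewrite -[LHS]/(S3 _).
under S3_ext => x y z do rewrite sumR_expand.
rewrite !S3D !S3N.
rewrite (@S3_collapse _ (a.1, b.2) (a.1, b.2) b); last first.
  by case=> [x1 x2] [y1 y2] [z1 z2]; case: a b => [a1 a2] [b1 b2]; rewrite !mulnb; congr nat_of_bool; crush.
rewrite (@S3_collapse _ (a.1, b.1) (a.1, b.1) (b.2, b.1)); last first.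
  by case=> [x1 x2] [y1 y2] [z1 z2]; case: a b => [a1 a2] [b1 b2]; rewrite !mulnb; congr nat_of_bool; crush.
rewrite (@S3_collapse _ (a.1, bar a.1) (bar b.2, b.2) b); last first.
  by case=> [x1 x2] [y1 y2] [z1 z2]; case: a b => [a1 a2] [b1 b2]; rewrite !mulnb; congr nat_of_bool; crush.
rewrite (@S3_collapse _ (a.1, bar a.1) (bar b.1, b.1) (b.2, b.1)); last first.
  by case=> [x1 x2] [y1 y2] [z1 z2]; case: a b => [a1 a2] [b1 b2]; rewrite !mulnb; congr nat_of_bool; crush.
by [].
Qed.

End RS.

Arguments bnd {R}.
Section NFs.
Variable R : realType.
Local Notation C := (Cx R).
Variable A : algType C.
Local Notation pc c := ((c : C)%:P%:P : {poly {poly C}}).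
Local Notation pu := ('X : {poly {poly C}}).
Local Notation pv := (('X : {poly C})%:P : {poly {poly C}}).
Local Notation ser := (int -> int -> A).

Definition NF (Fs : seq ser) (c : nat -> {poly {poly C}}) (i j : int) : A :=
  \sum_(0 <= t < 8) pmul2 (c t) (nth (fun _ _ => 0) Fs t) i j.

Lemma NF_add Fs c d i j : NF Fs c i j + NF Fs d i j = NF Fs (fun t => c t + d t) i j.
Proof. by rewrite /NF -big_split; apply: eq_bigr => t _; rewrite pmul2D. Qed.

Lemma NF_opp Fs c i j : - NF Fs c i j = NF Fs (fun t => - c t) i j.
Proof. by rewrite /NF -sumrN; apply: eq_bigr => t _; rewrite pmul2N. Qed.

Lemma NF_mul Fs r c i j : pmul2 r (NF Fs c) i j = NF Fs (fun t => r * c t) i j.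
Proof. by rewrite /NF pmul2_sumF; apply: eq_bigr => t _; rewrite pmul2M. Qed.

Lemma NF_ext Fs c d i j : (forall t, (t < 8)%N -> c t = d t) -> NF Fs c i j = NF Fs d i j.
Proof.
move=> h; rewrite /NF big_nat_cond [RHS]big_nat_cond.
by apply: eq_bigr => t /andP[/andP[_ ht] _]; rewrite h.
Qed.

Lemma NF_mul0 Fs r c : (forall i j, NF Fs c i j = 0) ->
  forall i j, NF Fs (fun t => r * c t) i j = 0.
Proof. by move=> h i j; rewrite -NF_mul pmul2_zero. Qed.

Lemma pmul2_u (q : {poly C}) (H : ser) i j :
  pmul2 (pu + q%:P) H i j = H (i + 1) j + pmul2 q%:P H i j.
Proof. by rewrite pmul2D -[pu]mulr1 pmul2_Xl; congr (_ + _); exact: pmul2_1. Qed.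

Lemma pmul2_v (c : C) (H : ser) i j :
  pmul2 (pv + pc c) H i j = H i (j + 1) + c *: H i j.
Proof. by rewrite pmul2D -[pv]mulr1 pmul2_Xr -[pc c]mulr1 pmul2Cl; congr (_ + _ *: _); exact: pmul2_1. Qed.

Lemma pmul2_C0 (q : {poly C}) (H : ser) i j : (forall j, H i j = 0) ->
  pmul2 q%:P H i j = 0.
Proof.
move=> h; rewrite (@pmul2W _ _ 1 (size q)) ?big_ord1.
- by apply: big1 => l _; rewrite addr0 h scaler0.
- by rewrite size_polyC leq_b1.
- by move=> k; rewrite coefC; case: (k == 0)%N; rewrite ?size_poly0.
Qed.

Lemma cancel_u (q : {poly C}) (H : ser) (m0 : int) :
  (forall i j, i < m0 -> H i j = 0) ->
  (forall i j, pmul2 (pu + q%:P) H i j = 0) -> forall i j, H i j = 0.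
Proof.
move=> hs he.
have key : forall t : nat, forall i j, i < m0 + t%:Z -> H i j = 0.
  elim=> [|t IH] i j hi; first by apply: hs; rewrite addr0 in hi.
  case: (ltrP i (m0 + t%:Z)) => h2; first exact: IH.
  have -> : i = (i - 1) + 1 by rewrite subrK.
  have := he (i - 1) j; rewrite pmul2_u pmul2_C0 ?addr0 // => j'.
  by apply: IH; lia.
move=> i j; apply: (key `|i - m0|%N.+1); lia.
Qed.

Lemma cancel_v (c : C) (H : ser) (m0 : int) :
  (forall i j, j < m0 -> H i j = 0) ->
  (forall i j, pmul2 (pv + pc c) H i j = 0) -> forall i j, H i j = 0.
Proof.
move=> hs he.
have key : forall t : nat, forall i j, j < m0 + t%:Z -> H i j = 0.
  elim=> [|t IH] i j hj; first by apply: hs; rewrite addr0 in hj.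
  case: (ltrP j (m0 + t%:Z)) => h2; first exact: IH.
  have -> : j = (j - 1) + 1 by rewrite subrK.
  have := he i (j - 1); rewrite pmul2_v (IH i (j - 1)) ?scaler0 ?addr0 //; lia.
move=> i j; apply: (key `|j - m0|%N.+1); lia.
Qed.

Lemma pmul2_supp (p : {poly {poly C}}) (F : ser) i j :
  (forall i j, (i < 0) || (j < 0) -> F i j = 0) ->
  (i + (size p)%:Z <= 0) || (j + (bnd p)%:Z <= 0) -> pmul2 p F i j = 0.
Proof.
move=> hF h; rewrite (@pmul2W _ _ (size p) (bnd p)) //; last exact: bndP.
apply: big1 => k _; apply: big1 => l _; rewrite hF ?scaler0 //.
have := ltn_ord k; have := ltn_ord l; lia.
Qed.

Definition NFb (c : nat -> {poly {poly C}}) : nat :=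
  (\sum_(t < 8) (size (c t) + bnd (c t)))%N.

Lemma NF_supp Fs c :
  (forall t, (t < 8)%N -> forall i j, (i < 0) || (j < 0) -> nth (fun _ _ => 0) Fs t i j = 0) ->
  forall i j, (i + (NFb c)%:Z <= 0) || (j + (NFb c)%:Z <= 0) -> NF Fs c i j = 0.
Proof.
move=> hF i j h; rewrite /NF big_nat_cond; apply: big1 => t /andP[/andP[_ ht] _].
apply: pmul2_supp; first exact: hF.
have : (size (c t) + bnd (c t) <= NFb c)%N.
  by rewrite /NFb (bigD1 (Ordinal ht)) //= leq_addr.
lia.
Qed.

End NFs.

Arguments NF {R A}.
Arguments NFb {R}.
Section Aux.
Variable R : realType.
Local Notation C := (Cx R).
Variable A : algType C.

Lemma ext_neg (f : nat -> A) (i : int) : i < 0 -> ext f i = 0.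
Proof. by case: i. Qed.

Lemma pmul2_vu (q : {poly C}) (g f : nat -> A) i j :
  pmul2 q%:P (ser_vu g f) i j = pmul1 q (ext g) j * ext f i.
Proof.
rewrite (@pmul2W _ _ 1 (size q)) ?big_ord1.
- rewrite /pmul1 mulr_suml; apply: eq_bigr => l _.
  by rewrite coefC eqxx /ser_vu addr0 scalerAl.
- by rewrite size_polyC leq_b1.
- by move=> k; rewrite coefC; case: (k == 0)%N; rewrite ?size_poly0.
Qed.
Local Notation ser := (int -> int -> A).
Local Notation P := {poly {poly Cx R}}.

Lemma NF8 (F0 F1 F2 F3 F4 F5 F6 F7 : ser) (d c0 c1 c2 c3 c4 c5 c6 c7 : P) i j :
  NF [:: F0; F1; F2; F3; F4; F5; F6; F7] (nth d [:: c0; c1; c2; c3; c4; c5; c6; c7]) i j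
  = pmul2 c0 F0 i j + (pmul2 c1 F1 i j + (pmul2 c2 F2 i j + (pmul2 c3 F3 i j +
    (pmul2 c4 F4 i j + (pmul2 c5 F5 i j + (pmul2 c6 F6 i j + (pmul2 c7 F7 i j + 0))))))).
Proof. by rewrite /NF; do 8 rewrite big_ltn //; rewrite big_geq. Qed.

Lemma conv1 (D w o z : P) (T X Y L Z W V Zt : ser) i j :
  o = 1 -> z = 0 ->
  pmul2 (D * w) T i j - pmul2 D T i j - pmul2 w X i j + Y i j
    = pmul2 (w * D) L i j - pmul2 w L i j - pmul2 D Z i j + Z i j ->
  NF [:: T; X; Y; L; Z; W; V; Zt] (nth z [:: D * w - D; - w; o; - (w * D) + w; D - o; z; z; z]) i j = 0.
Proof.
move=> ho hz h.
have p1 : forall F : ser, pmul2 o F i j = F i j by move=> F; rewrite ho pmul2_1.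
have p0 : forall F : ser, pmul2 z F i j = 0 by move=> F; rewrite hz pmul2_0.
rewrite NF8 !p0 !pmul2B !pmul2D !pmul2N !p1.
rewrite !addr0; move/eqP: h; rewrite -subr_eq0 => /eqP <-.
by rewrite !opprD !opprK !addrA.
Qed.

Lemma conv2 (D w o z : P) (T X Y L Z W V Zt : ser) i j :
  o = 1 -> z = 0 ->
  pmul2 (D * w) X i j - pmul2 D Y i j - pmul2 w T i j + T i j
    = pmul2 (w * D) W i j - pmul2 w W i j - pmul2 D W i j + W i j ->
  NF [:: T; X; Y; L; Z; W; V; Zt] (nth z [:: - w + o; D * w; - D; z; z; - (w * D) + w + D - o; z; z]) i j = 0.
Proof.
move=> ho hz h.
have p1 : forall F : ser, pmul2 o F i j = F i j by move=> F; rewrite ho pmul2_1.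
have p0 : forall F : ser, pmul2 z F i j = 0 by move=> F; rewrite hz pmul2_0.
rewrite NF8 !p0 !pmul2B !pmul2D !pmul2N !p1.
rewrite !addr0 !add0r; move/eqP: h; rewrite -subr_eq0 => /eqP <-.
have perm4 : forall a b c d : A, a + b + c + d = c + d + a + b.
  by move=> a b c d; rewrite -addrA addrC !addrA.
by rewrite perm4 !opprD !opprK !addrA [LHS](ACl (3*4*1*2*7*8*5*6))%AC.
Qed.

Lemma conv3 (Q Q1 o z : P) (T X Y L Z W V Zt : ser) i j :
  o = 1 -> z = 0 ->
  pmul2 Q Zt i j = pmul2 Q1 W i j - V i j ->
  NF [:: T; X; Y; L; Z; W; V; Zt] (nth z [:: z; z; z; z; z; Q1; - o; - Q]) i j = 0.
Proof.
move=> ho hz h.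
have p1 : forall F : ser, pmul2 o F i j = F i j by move=> F; rewrite ho pmul2_1.
have p0 : forall F : ser, pmul2 z F i j = 0 by move=> F; rewrite hz pmul2_0.
rewrite NF8 !p0 !pmul2N !p1.
rewrite !add0r !addr0; move/eqP: h; rewrite eq_sym -subr_eq0 => /eqP <-.
by rewrite !addrA.
Qed.

Lemma conv4 (Q Q1 o z : P) (T X Y L Z W V Zt : ser) i j :
  o = 1 -> z = 0 ->
  pmul2 Q V i j = pmul2 Q1 Z i j - Zt i j ->
  NF [:: T; X; Y; L; Z; W; V; Zt] (nth z [:: z; z; z; z; Q1; z; - Q; - o]) i j = 0.
Proof.
move=> ho hz h.
have p1 : forall F : ser, pmul2 o F i j = F i j by move=> F; rewrite ho pmul2_1.
have p0 : forall F : ser, pmul2 z F i j = 0 by move=> F; rewrite hz pmul2_0.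
rewrite NF8 !p0 !pmul2N !p1.
rewrite !add0r !addr0; move/eqP: h; rewrite eq_sym -subr_eq0 => /eqP <-.
by rewrite !addrA addrAC.
Qed.

Lemma convF (P0 P1 P2 P3 z : P) (T X Y L Z W V Zt : ser) i j :
  z = 0 ->
  NF [:: T; X; Y; L; Z; W; V; Zt] (nth z [:: P1; z; z; - P0; z; - P2; - P3; z]) i j = 0 ->
  pmul2 P0 L i j = pmul2 P1 T i j - pmul2 P2 W i j - pmul2 P3 V i j.
Proof.
move=> hz.
have p0 : forall F : ser, pmul2 z F i j = 0 by move=> F; rewrite hz pmul2_0.
rewrite NF8 !p0 !pmul2N !add0r !addr0 !addrA => h.
apply/eqP; rewrite eq_sym -subr_eq0; apply/eqP; rewrite -h.
by rewrite [LHS](ACl (1*4*2*3))%AC.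
Qed.

End Aux.

Local Notation DD R := (('X : {poly {poly Cx R}}) - (('X : {poly Cx R})%:P)).
Local Notation WW R rho := (- ('X : {poly {poly Cx R}}) - (('X : {poly Cx R})%:P) - ((rho : Cx R)%:P%:P)).

Arguments ext_neg {R A f i}. Arguments NF_mul0 {R A Fs} r {c}. Arguments NF_supp {R A}. Arguments cancel_u {R A}. Arguments cancel_v {R A}. Arguments NF_ext {R A}. Arguments conv1 {R A}. Arguments conv2 {R A}. Arguments conv3 {R A}. Arguments conv4 {R A}. Arguments convF {R A}.

Theorem mainTheorem2 (R : realType) (A : algType (Cx R)) (n : nat)
  (s : 'I_(n.*2).+1 -> 'I_(n.*2).+1 -> nat -> A) (rho : Cx R) :
  (0 < n)%N ->
  RS_relation s rho ->
  symmetry_relation s rho ->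
  forall (k : 'I_(n.*2).+1), (k < n)%N ->
  let nh : 'I_(n.*2).+1 := inord n in
  let pu := ('X : {poly {poly Cx R}}) in
  let pv := (('X : {poly Cx R})%:P : {poly {poly Cx R}}) in
  let pc := fun c : Cx R => (c%:P%:P : {poly {poly Cx R}}) in
  forall i j : int,
    pmul2 ((pu - pv) * (pu + pv + pc rho) * (pv *+ 2 + pc rho))
          (ser_vu (sser s nh nh) (sser s k nh)) i j
  = pmul2 ((pu - pv + 1) * (pu + pv + pc (rho + 1)) * (pv *+ 2 + pc rho))
          (ser_uv (sser s k nh) (sser s nh nh)) i j
    - pmul2 ((pu + pv + pc rho) * (pv *+ 2 + pc (rho + 1)))
          (ser_vu (sser s k nh) (sser s nh nh)) i j
    - pmul2 ((pu - pv) * (pv *+ 2 + pc (rho - 1)))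
          (ser_vu (stilde rho (sser s k nh)) (sser s nh nh)) i j.
Proof.
move=> hn RS SY k hk; cbv zeta.
pose n' : 'I_(n.*2).+2 := inord n.
pose k' : 'I_(n.*2).+2 := inord k.
have hk2 : (k < (n.*2).+2)%N by lia.
have an' : alpha n' = inord n.
  by rewrite /alpha /n' inordK ?leqnn //; lia.
have abn' : alpha (bar n') = inord n.
  rewrite /alpha /bar /n' /=; congr inord; rewrite inordK; last by lia.
  have -> : (n.*2.+2 - n.+1 = n.+1)%N by lia.
  by rewrite ltnn.
have ak' : alpha k' = k.
  by rewrite /alpha /k' inordK // ifT ?inord_val //; lia.
set nh := (inord n : 'I_(n.*2).+1).
set K := sser s k nh. set Nn := sser s nh nh. set Bk := sser s nh (alpha (bar k')).
set Fs := [:: ser_uv K Nn; ser_uv Nn K; ser_uv Bk Nn; ser_vu Nn K; ser_vu Bk Nn;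
              ser_vu K Nn; ser_vu (stilde rho K) Nn; ser_vu (stilde rho Bk) Nn].
have FsS : forall t, (t < 8)%N -> forall i j, (i < 0) || (j < 0) ->
    nth (fun _ _ => 0) Fs t i j = 0.
  move=> t ht i j /orP[] h; rewrite /Fs;
  case: t ht => [|[|[|[|[|[|[|[|t]]]]]]]] //= _;
  by rewrite /ser_uv /ser_vu (ext_neg h) ?mul0r ?mulr0.
have E1 : forall i j, NF Fs (nth 0 [:: DD R * WW R rho - DD R; - WW R rho; 1;
     - (WW R rho * DD R) + WW R rho; DD R - 1; 0; 0; 0]) i j = 0.
  move=> i j; apply: conv1 => //.
  have := RS (k', n') (n', n') i j.
  rewrite RSL RSR /= /Sent an' abn' ak' -/nh -/K -/Nn -/Bk.
  exact.
have E2 : forall i j, NF Fs (nth 0 [:: - WW R rho + 1; DD R * WW R rho; - DD R; 0; 0;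
     - (WW R rho * DD R) + WW R rho + DD R - 1; 0; 0]) i j = 0.
  move=> i j; apply: conv2 => //.
  have := RS (n', k') (n', n') i j.
  rewrite RSL RSR /= /Sent an' abn' ak' -/nh -/K -/Nn -/Bk.
  exact.
pose Q := (('X *+ 2 + rho%:P : {poly Cx R})%:P : {poly {poly Cx R}}).
pose Q1 := (('X *+ 2 + (rho + 1)%:P : {poly Cx R})%:P : {poly {poly Cx R}}).
have E3 : forall i j, NF Fs (nth 0 [:: 0; 0; 0; 0; 0; Q1; - 1; - Q]) i j = 0.
  move=> i j; apply: conv3 => //.
  rewrite /Q /Q1 !pmul2_vu /ser_vu -mulrBl; congr (_ * _).
  have := SY k' n' j.
  rewrite /Sent an' abn' ak' -/nh -/K -/Nn -/Bk.
  exact.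
have E4 : forall i j, NF Fs (nth 0 [:: 0; 0; 0; 0; Q1; 0; - Q; - 1]) i j = 0.
  move=> i j; apply: conv4 => //.
  rewrite /Q /Q1 !pmul2_vu /ser_vu -mulrBl; congr (_ * _).
  have := SY n' (bar k') j.
  rewrite /Sent /bar rev_ordK an' abn' ak' -/nh -/K -/Nn.
  exact.
pose phi := nth 0 [:: (WW R rho - 1) * (DD R + 1); 0; 0; - (DD R * WW R rho); DD R;
                     - (WW R rho - 1); 0; 0].
have H1 : forall i j, NF Fs phi i j = 0.
  apply: (@cancel_u _ _ (- 'X - 1) _ (- (NFb phi)%:Z)).
    move=> i j hi; apply: NF_supp => //; apply/orP; left; lia.
  move=> i j; rewrite NF_mul.
  rewrite (@NF_ext _ _ _ _ (fun t => DD R * nth 0 [:: DD R * WW R rho - DD R; - WW R rho; 1;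
     - (WW R rho * DD R) + WW R rho; DD R - 1; 0; 0; 0] t + nth 0 [:: - WW R rho + 1; DD R * WW R rho; - DD R; 0; 0;
     - (WW R rho * DD R) + WW R rho + DD R - 1; 0; 0] t)).
    by rewrite -NF_add (NF_mul0 _ E1) E2 addr0.
  by move=> t; rewrite /phi; case: t => [|[|[|[|[|[|[|[|t]]]]]]]] //= _; ring.
pose psi := nth 0 [:: 0; 0; 0; 0; Q; - 1; 1 - Q; 0].
have two : (2 : Cx R) != 0 by rewrite /Cx pnatr_eq0.
have H2 : forall i j, NF Fs psi i j = 0.
  apply: (@cancel_v _ _ ((rho + 1) / 2) _ (- (NFb psi)%:Z)).
    move=> i j hj; apply: NF_supp => //; apply/orP; right; lia.
  move=> i j.
  have e2 : ((2 : Cx R)%:P%:P : {poly {poly Cx R}}) * ((('X : {poly Cx R})%:P) + ((rho + 1) / 2)%:P%:P) = Q1.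
    have ec : 2 * ((rho + 1) / 2) = rho + 1 by rewrite mulrC divfK.
    move: ((rho + 1) / 2) ec => c ec.
    by rewrite /Q1 -ec; ring.
  set x := pmul2 _ _ i j.
  have hx : 2 *: x = 0.
    rewrite /x -pmul2Cl e2 NF_mul.
    rewrite (@NF_ext _ _ _ _ (fun t => Q * nth 0 [:: 0; 0; 0; 0; Q1; 0; - Q; - 1] t
        + - nth 0 [:: 0; 0; 0; 0; 0; Q1; - 1; - Q] t)).
      by rewrite -NF_add -NF_opp (NF_mul0 _ E4) E3 oppr0 addr0.
    by move=> t; rewrite /psi /Q /Q1; case: t => [|[|[|[|[|[|[|[|t]]]]]]]] //= _; ring.
  by rewrite -[x]scale1r -(mulVf two) -scalerA hx scaler0.
move=> i j.
apply: (@convF R A _ _ _ _ 0 _ (ser_uv Nn K) (ser_uv Bk Nn) _ (ser_vu Bk Nn) _ _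
          (ser_vu (stilde rho Bk) Nn)) => //.
rewrite -/Fs.
rewrite (@NF_ext _ _ _ _ (fun t => DD R * psi t + - (Q * phi t))).
  by rewrite -NF_add -NF_opp (NF_mul0 _ H2) (NF_mul0 _ H1) oppr0 addr0.
by move=> t; rewrite /psi /phi /Q; case: t => [|[|[|[|[|[|[|[|t]]]]]]]] //= _; ring.
Qed.
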